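(* Let $F$ be a finite field with $q=|F|$. Let $r,m,n\in\mathbb{N}$ satisfy $m\le n$. Then the number of $(m+n+1)$-tuples $x\in F^{m+n+1}$ satisfying $\operatorname{rank}(H_{m,n}(x))=r$ equals $1$ if $r=0$; $q^{2r-2}(q^2-1)$ if $0<r\le m$; $q^{2r-2}(q^{n-m+1}-1)$ if $r=m+1$; and $0$ if $r>m+1$.
   Context: $\mathbb{N}=\{0,1,2,\ldots\}$. For $N\in\mathbb{N}$, $x=(x_0,\ldots,x_N)\in F^{N+1}$ and integers $p,p'\ge -1$ with $p+p'\le N$, the Hankel matrix $H_{p,p'}(x)$ is the $(p+1)\times(p'+1)$ matrix $(x_{i+j})_{0\le i\le p,\,0\le j\le p'}$. *)

(* Defs.v *)
From mathcomp Require Import all_boot all_order all_algebra.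
Set Implicit Arguments. Unset Strict Implicit. Unset Printing Implicit Defensive.
Import GRing.Theory.
Local Open Scope ring_scope.

(* Hankel matrix H_{p,p'}(x) = (x_{i+j})_{0<=i<=p, 0<=j<=p'} for
   x = (x_0,...,x_N) with p + p' <= N.  Here we take N = p + p', the case
   needed (x in F^{m+n+1}).  inord (i+j) is exact since i + j <= p + p'. *)
Definition hankel (F : Type) (p p' : nat) (x : {ffun 'I_(p + p').+1 -> F})
  : 'M[F]_(p.+1, p'.+1) :=
  \matrix_(i < p.+1, j < p'.+1) x (inord (i + j)).

Definition hankel_rank_count (F : finFieldType) (m n r : nat) : nat :=
  #|[set x : {ffun 'I_(m + n).+1 -> F} | \rank (hankel x) == r]|.

(* Main.v *)
Require Import Defs.
From mathcomp Require Import all_boot all_order all_algebra zify.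
Set Implicit Arguments. Unset Strict Implicit. Unset Printing Implicit Defensive.
Import GRing.Theory.
Lemma geo p k r : r <= k.+1 ->
  p.+1 ^ (k.+1 - r) = 1 + p * \sum_(s < k.+1) (r <= s) * p.+1 ^ (k - s).
Proof.
elim: k r => [|k IH] r hr.
  rewrite big_ord1 subnn expn0 muln1.
  by case: r hr => [|[|r]] //= _; rewrite ?muln1 ?muln0 ?addn0 // expn1 add1n.
rewrite big_ord_recr /= subnn expn0 muln1.
have -> : \sum_(i < k.+1) (r <= widen_ord (leqnSn k.+1) i) * p.+1 ^ (k.+1 - widen_ord (leqnSn k.+1) i)
   = p.+1 * \sum_(s < k.+1) (r <= s) * p.+1 ^ (k - s).
  rewrite big_distrr /=; apply: eq_bigr => i _.
  by rewrite subSn ?expnS 1?mulnCA // -ltnS.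
case: (leqP r k.+1) => h.
  rewrite subSn // expnS IH // /=; nia.
have -> : r = k.+2 by lia.
rewrite subnn big1 ?muln0 ?addn0 // => i _.
by rewrite leqNgt (leq_trans (ltn_ord i)) // muln0.
Qed.

Local Open Scope ring_scope.

Section S.
Variable F : finFieldType.

Lemma card_rowspace m n (B : 'M[F]_(m,n)) :
  #|[set v : 'rV_n | (v <= B)%MS]| = (#|F| ^ \rank B)%N.
Proof.
have inj := @row_free_inj _ 1 _ _ _ (row_base_free B).
have -> : [set v : 'rV_n | (v <= B)%MS] = [set u *m row_base B | u in [set: 'rV_(\rank B)]].
  apply/setP => v; rewrite inE; apply/idP/imsetP.
    move=> vB; have: (v <= row_base B)%MS by rewrite eq_row_base.
    by case/submxP=> D ->; exists D; rewrite ?inE.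
  case=> u _ ->; apply: submx_trans (submxMl _ _) _; by rewrite eq_row_base.
by rewrite card_imset // cardsT card_mx mul1n.
Qed.

Lemma card_ker m n (A : 'M[F]_(m,n)) :
  #|[set v : 'rV_m | v *m A == 0]| = (#|F| ^ (m - \rank A))%N.
Proof.
rewrite -mxrank_ker -card_rowspace; apply: eq_card => v; rewrite !inE.
by rewrite sub_kermx.
Qed.

Definition Hk {N} k c (x : 'I_N.+1 -> F) : 'M[F]_(k.+1, c.+1) :=
  \matrix_(i < k.+1, j < c.+1) x (inord (i + j)).

Lemma shift_rank N k c (x : 'I_N.+1 -> F) :
  (\rank (Hk k c.+1 x) <= k)%N ->
  (\rank (Hk k.+1 c x) <= \rank (Hk k c.+1 x))%N.
Proof.
set H := Hk k c.+1 x; set H' := Hk k.+1 c x.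
move=> rH.
set K := kermx H.
have rK : \rank K = (k.+1 - \rank H)%N by rewrite mxrank_ker.
have hKH : K *m H = 0 by apply: mulmx_ker.
have K0 : K != 0.
  by rewrite -mxrank_eq0 rK; apply/negP => /eqP; lia.
have [i0 i0D] : exists i0 : 'I_k.+1,
    [exists v : 'rV_k.+1, (v <= K)%MS && (v 0 i0 != 0)].
  case/rowV0Pn: K0 => v vK /rV0Pn[i vi]; exists i; apply/existsP; exists v.
  by rewrite vK vi.
clearbody K.
pose P := fun i : 'I_k.+1 => [exists v : 'rV_k.+1, (v <= K)%MS && (v 0 i != 0)].
case: (@arg_minnP _ i0 P (fun i => val i) i0D) => d dD dmin.
case/existsP: dD => w /andP[wK wd].
pose iw : 'rV[F]_(k.+2) := \row_j (if (j < k.+1)%N then w 0 (inord j) else 0).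
pose S : 'M[F]_(k.+1, 1 + k.+1) := row_mx (0 : 'M_(k.+1, 1)) (1%:M : 'M_(k.+1)).
have hSH : S *m H' = \matrix_(i < k.+1, j < c.+1) x (inord (i.+1 + j)).
  apply/matrixP => i j; rewrite mxE [RHS]mxE big_split_ord /= big_ord1.
  rewrite /S row_mxEl mxE mul0r add0r.
  rewrite (bigD1 i) //= big1 ?addr0.
    by rewrite row_mxEr mxE eqxx mul1r /H' mxE.
  by move=> l /negbTE ne; rewrite row_mxEr mxE eq_sym ne mul0r.
have f1 : K *m S *m H' = 0.
  rewrite -mulmxA hSH; apply/matrixP => a j.
  transitivity ((K *m H) a (lift ord0 j)); last by rewrite hKH !mxE.
  rewrite [LHS]mxE [RHS]mxE; apply: eq_bigr => l _.
  rewrite !mxE; congr (_ * x (inord _)); rewrite /= /bump /=; lia.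
have wH : w *m H = 0 by case/submxP: wK => D ->; rewrite -mulmxA hKH mulmx0.
have f2 : iw *m H' = 0.
  apply/matrixP => a j; rewrite [a]ord1.
  transitivity ((w *m H) 0 (widen_ord (leqnSn _) j)); last by rewrite wH !mxE.
  rewrite mxE big_ord_recr /= [iw _ ord_max]mxE ltnn mul0r addr0 [RHS]mxE.
  apply: eq_bigr => i _; rewrite !mxE /= ltn_ord inord_val //.
have f3 : ~~ (iw <= K *m S)%MS.
  apply/negP => /submxP[D eD].
  have zK : (D *m K <= K)%MS := submxMl D K.
  have hz : (D *m K) *m S = row_mx 0 (D *m K) by rewrite /S mul_mx_row mulmx0 mulmx1.
  have := congr1 (fun M : 'rV_(k.+2) => M 0 (widen_ord (leqnSn _) d)) eD.
  rewrite mulmxA hz /= [iw _ _]mxE /= ltn_ord inord_val.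
  case: d dmin wd => d hd dmin wd /=.
  case: d hd dmin wd => [|d'] hd dmin wd.
    have -> : widen_ord (leqnSn _) (Ordinal hd) = lshift (k.+1) (ord0 : 'I_1) :> 'I_(1 + k.+1)
      by apply: val_inj.
    by rewrite (@row_mxEl _ 1 1 k.+1) mxE => e; rewrite e eqxx in wd.
  have hd' : (d' < k.+1)%N by lia.
  have -> : widen_ord (leqnSn _) (Ordinal hd) = rshift 1 (Ordinal hd') :> 'I_(1 + k.+1)
    by apply: val_inj.
  rewrite (@row_mxEr _ 1 1 k.+1) => e.
  have z0 : (D *m K) 0 (Ordinal hd') = 0.
    apply/eqP; apply/negPn/negP => nz.
    have : P (Ordinal hd') by apply/existsP; exists (D *m K); rewrite zK nz.
    by move/dmin => /=; lia.
  by rewrite e z0 eqxx in wd.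
have rKS : \rank (K *m S) = \rank K.
  apply: mxrankMfree; apply/row_freeP; exists (col_mx 0 1%:M).
  by rewrite mul_row_col mulmx0 mul1mx add0r.
have lt : (\rank (K *m S) < \rank (K *m S + iw)%MS)%N.
  apply: rank_ltmx; rewrite ltmxE addsmxSl /= addsmx_sub submx_refl /=.
  exact: f3.
have sub : (K *m S + iw <= kermx H')%MS.
  by rewrite addsmx_sub !sub_kermx; apply/andP; split; apply/eqP.
have := mxrankS sub; rewrite mxrank_ker.
have := rank_leq_row H'; have := rank_leq_row H.
move: lt; rewrite rKS rK. lia.
Qed.

Lemma Hk_tr N k c (x : 'I_N.+1 -> F) : (Hk k c x)^T = Hk c k x.
Proof. by apply/matrixP => i j; rewrite !mxE addnC. Qed.

Definition rho N (x : 'I_N.+1 -> F) k := \rank (Hk k (N - k) x).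

Lemma rho_up N (x : 'I_N.+1 -> F) k : (k < N)%N ->
  (rho x k <= k)%N -> (rho x k.+1 <= rho x k)%N.
Proof.
move=> kN; rewrite /rho.
have -> : (N - k = (N - k.+1).+1)%N by lia.
exact: shift_rank.
Qed.

Lemma rho_down N (x : 'I_N.+1 -> F) k : (0 < k)%N -> (k + k <= N)%N ->
  (rho x k <= k)%N -> (rho x k.-1 <= rho x k)%N.
Proof.
move=> k0 kN; rewrite /rho -(mxrank_tr (Hk k (N-k) x)).
rewrite -(mxrank_tr (Hk k.-1 _ x)) !Hk_tr.
have -> : (N - k.-1 = (N - k).+1)%N by lia.
have -> : k = (k.-1).+1 by lia.
rewrite -pred_Sn => h; apply: shift_rank; lia.
Qed.

Lemma rho_profile N (x : 'I_N.+1 -> F) m s : (s <= m)%N -> (m + m <= N)%N ->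
  (rho x m <= s)%N = (rho x s <= s)%N.
Proof.
move=> sm mN; apply/idP/idP => h.
  have: forall t, (t <= m - s)%N -> (rho x (m - t) <= rho x m)%N.
    elim=> [|t IH] ht; first by rewrite subn0.
    have h1 := IH (ltnW ht).
    have -> : (m - t.+1 = (m - t).-1)%N by lia.
    apply: leq_trans h1; apply: rho_down; try lia.
  move/(_ (m - s)%N (leqnn _)); have -> : (m - (m - s) = s)%N by lia.
  move=> h2; lia.
have: forall t, (s + t <= m)%N -> (rho x (s + t) <= rho x s)%N.
  elim=> [|t IH] ht; first by rewrite addn0.
  have h1 : (rho x (s + t) <= rho x s)%N by apply: IH; lia.
  rewrite addnS; apply: leq_trans h1; apply: rho_up; try lia.
move/(_ (m - s)%N); have -> : (s + (m - s) = m)%N by lia.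
move=> h2; have := h2 (leqnn _); lia.
Qed.

Lemma card_ffun_set N (P : 'rV[F]_N.+1 -> bool) :
  #|[set x : {ffun 'I_N.+1 -> F} | P (\row_a x a)]| = #|[set y : 'rV_N.+1 | P y]|.
Proof.
pose f := fun x : {ffun 'I_N.+1 -> F} => (\row_a x a : 'rV_N.+1).
have finj : injective f.
  move=> x1 x2 /matrixP e; apply/ffunP => a; have := e 0 a; by rewrite !mxE.
rewrite -(card_imset _ finj); apply: eq_card => y; rewrite [y \in [set _ | _]]inE.
apply/imsetP/idP => [[x]|Py]; first by rewrite inE => Px ->.
exists [ffun a => y 0 a]; rewrite ?inE.
  suff -> : (\row_a [ffun a0 => y 0 a0] a : 'rV_N.+1) = y by [].
  by apply/matrixP => a b; rewrite [a]ord1 !mxE ffunE.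
by apply/matrixP => a b; rewrite [a]ord1 !mxE ffunE.
Qed.

Lemma last_nz n (v : 'rV[F]_n.+1) : v != 0 ->
  exists d : 'I_n.+1, v 0 d != 0 /\ forall i : 'I_n.+1, (d < i)%N -> v 0 i = 0.
Proof.
case/rV0Pn => i0 h.
case: (@arg_maxnP _ i0 (fun i => v 0 i != 0) val h) => d hd dmax.
exists d; split => // i di; apply/eqP; apply/negPn/negP => nz.
have := dmax i nz; rewrite /geq /= => hh; lia.
Qed.

Definition Mv N k c (v : 'rV[F]_k.+1) : 'M[F]_(N.+1, c.+1) :=
  \matrix_(a < N.+1, j < c.+1) \sum_(i < k.+1) v 0 i * ((a : nat) == (i + j)%N)%:R.

Lemma Mv_eq N k c (v : 'rV[F]_k.+1) (x : 'I_N.+1 -> F) : (k + c <= N)%N ->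
  v *m Hk k c x = (\row_a x a) *m Mv N c v.
Proof.
move=> kc; apply/matrixP => a j; rewrite [a]ord1 !mxE.
rewrite (eq_bigr (fun b => \sum_i x b * (v 0 i * ((b:nat) == (i + j)%N)%:R))); last first.
  by move=> b _; rewrite !mxE mulr_sumr.
rewrite exchange_big /=; apply: eq_bigr => i _.
have hij : (i + j < N.+1)%N by have := ltn_ord i; have := ltn_ord j; lia.
rewrite (bigD1 (Ordinal hij)) //= big1 ?addr0.
  rewrite eqxx mulr1 mulrC mxE; congr (x _ * _); apply: val_inj; rewrite /= inordK //.
move=> b /eqP nb; have -> : ((b : nat) == (i + j)%N) = false.
  by apply/eqP => e; apply: nb; apply: val_inj.
by rewrite mulr0 mulr0.
Qed.

Lemma Mv_rank N k c (v : 'rV[F]_k.+1) : v != 0 -> (k + c <= N)%N ->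
  \rank (Mv N c v) = c.+1.
Proof.
move=> vnz kc; rewrite -mxrank_tr; apply/eqP; apply: inj_row_free => y hy.
apply/eqP; apply/negPn/negP => ynz.
have [j [yj jmax]] := last_nz ynz.
have [d [vd dmax]] := last_nz vnz.
have hjd : (j + d < N.+1)%N by have := ltn_ord j; have := ltn_ord d; lia.
have := congr1 (fun M : 'rV_N.+1 => M 0 (Ordinal hjd)) hy.
rewrite mxE (bigD1 j) //= big1 ?addr0.
  rewrite !mxE (bigD1 d) //= big1 ?addr0.
    rewrite addnC eqxx mulr1. by move=> /eqP; rewrite mulf_eq0 (negbTE yj) (negbTE vd).
  move=> i /eqP nid; have -> : (j + d == i + j)%N = false.
    by apply/eqP => e; apply: nid; apply: val_inj => /=; lia.
  by rewrite mulr0.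
move=> j' /eqP nj; rewrite !mxE.
have [->|y'] := eqVneq (y 0 j') 0; first by rewrite mul0r.
have jj : (j' < j)%N.
  have: ~ (j < j')%N by move=> h; move: y'; rewrite jmax // eqxx.
  have : (j' : nat) <> j by move=> e; apply: nj; apply: val_inj.
  lia.
rewrite big1 ?mulr0 // => i _.
have [e|ne] := eqVneq (j + d)%N (i + j')%N; last by rewrite mulr0.
by rewrite dmax ?mul0r //; lia.
Qed.

Lemma card_x_v N k c (v : 'rV[F]_k.+1) : v != 0 -> (k + c)%N = N ->
  #|[set x : {ffun 'I_N.+1 -> F} | v *m Hk k c x == 0]| = (#|F| ^ k)%N.
Proof.
move=> vnz kc.
have -> : [set x : {ffun 'I_N.+1 -> F} | v *m Hk k c x == 0] =
          [set x : {ffun 'I_N.+1 -> F} | (\row_a x a) *m Mv N c v == 0].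
  by apply/setP => x; rewrite !inE Mv_eq //; lia.
rewrite (card_ffun_set (fun y => y *m Mv N c v == 0)) card_ker (Mv_rank vnz); last by lia.
congr (_ ^ _)%N; lia.
Qed.

Lemma card_sum (T : finType) (P : pred T) : #|[set t | P t]| = (\sum_t (P t : nat))%N.
Proof.
rewrite -sum1_card big_mkcond; apply: eq_bigr => t _; rewrite inE; by case: (P t).
Qed.

Lemma sum_ker N k c : (k + c)%N = N ->
  (\sum_(x : {ffun 'I_N.+1 -> F}) #|[set v : 'rV_k.+1 | v *m Hk k c x == 0%R]|)%N
  = (#|F| ^ N.+1 + (#|F| ^ k.+1 - 1) * #|F| ^ k)%N.
Proof.
move=> kc.
transitivity (\sum_(x : {ffun 'I_N.+1 -> F}) \sum_(v : 'rV_k.+1) ((v *m Hk k c x == 0)%R : nat))%N.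
  by apply: eq_bigr => x _; rewrite card_sum.
rewrite exchange_big /= (bigD1 0) //=.
have -> : (\sum_(x : {ffun 'I_N.+1 -> F}) (((0 : 'rV_k.+1) *m Hk k c x == 0)%R : nat))%N
    = (#|F| ^ N.+1)%N.
  under eq_bigr do rewrite mul0mx eqxx.
  by rewrite sum1_card card_ffun card_ord.
congr (_ + _)%N.
rewrite (eq_bigr (fun _ => #|F| ^ k)%N); last first.
  by move=> v vnz; rewrite -card_sum card_x_v.
rewrite sum_nat_const.
have -> : #|(fun i : 'rV[F]_k.+1 => i != 0)| = #|predC1 (0 : 'rV[F]_k.+1)| by apply: eq_card.
by rewrite cardC1 card_mx mul1n subn1.
Qed.

Definition bcount N s := #|[set x : {ffun 'I_N.+1 -> F} | (rho x s <= s)%N]|.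

Lemma bsum N k : (k + k <= N)%N ->
  ((#|F| - 1) * \sum_(s < k.+1) bcount N s * #|F| ^ (k - s)
     = (#|F| ^ k.+1 - 1) * #|F| ^ k)%N.
Proof.
move=> kN.
have q1 := card_finNzRing_gt1 F.
have hkc : (k + (N - k) = N)%N by lia.
have [p hp] : exists p, #|F| = p.+1 by exists (#|F|.-1); rewrite prednK // (ltn_trans _ q1).
have := @sum_ker N k (N - k) hkc.
have E : forall x : {ffun 'I_N.+1 -> F},
    #|[set v : 'rV_k.+1 | v *m Hk k (N - k) x == 0%R]| =
    (1 + p * \sum_(s < k.+1) (rho x s <= s) * p.+1 ^ (k - s))%N.
  move=> x; rewrite card_ker hp geo; last exact: rank_leq_row.
  congr (1 + p * _)%N; apply: eq_bigr => s _.
  rewrite -(rho_profile x (m:=k)) //; last by have := ltn_ord s; lia.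
rewrite (eq_bigr _ (fun x _ => E x)) big_split /= sum1_card card_ffun card_ord hp.
rewrite -big_distrr /= exchange_big /=.
rewrite (eq_bigr (fun s : 'I_k.+1 => bcount N s * p.+1 ^ (k - s))%N); last first.
  move=> s _; rewrite -big_distrl /= /bcount card_sum //.
move=> hh; rewrite subn1 /=; lia.
Qed.

Lemma bval N k : (k + k <= N)%N -> bcount N k = (#|F| ^ (2 * k))%N.
Proof.
move=> kN.
have q1 := card_finNzRing_gt1 F.
have [p hp] : exists p, #|F| = p.+1 by exists (#|F|.-1); rewrite prednK // (ltn_trans _ q1).
have p0 : (0 < p)%N by move: q1; rewrite hp.
have := bsum kN; rewrite hp subn1 succnK.
case: k kN => [|k] kN.
  rewrite big_ord1 subnn !expn0 !muln1 expn1 subn1 /= => h.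
  by apply/eqP; rewrite -(eqn_pmul2l p0) muln1; apply/eqP; exact: h.
rewrite big_ord_recr /= subnn expn0 muln1.
have -> : (\sum_(i < k.+1) bcount N (widen_ord (leqnSn k.+1) i) * p.+1 ^ (k.+1 - widen_ord (leqnSn k.+1) i)
   = p.+1 * \sum_(s < k.+1) bcount N s * p.+1 ^ (k - s))%N.
  rewrite big_distrr /=; apply: eq_bigr => i _.
  by rewrite subSn ?expnS 1?mulnCA // -ltnS.
have := bsum (k := k) (N := N) ltac:(lia); rewrite hp subn1 succnK.
set S := (\sum_(s < k.+1) _)%N; set b := bcount N k.+1.
have -> : (2 * k.+1 = k + k + 2)%N by lia.
rewrite !expnS !expnD (expnS _ 1) expn1.
set Q := (p.+1 ^ k)%N.
have Q1 : (0 < Q)%N by rewrite expn_gt0.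
move=> h1 h2.
have : (p * b = p * (Q * Q * (p.+1 * p.+1)))%N by nia.
by move/eqP; rewrite eqn_pmul2l // => /eqP.
Qed.

Lemma split_le (T : finType) (f : T -> nat) r :
  #|[set t | (f t <= r.+1)%N]| = (#|[set t | (f t <= r)%N]| + #|[set t | (f t == r.+1)]|)%N.
Proof.
rewrite !card_sum -big_split /=; apply: eq_bigr => t _.
rewrite leq_eqVlt ltnS; case: eqP => [->|_] /=; first by rewrite ltnn.
by rewrite addn0.
Qed.

End S.

Unset Implicit Arguments.
Local Close Scope ring_scope.

Theorem corollary2 (F : finFieldType) (r m n : nat) (hmn : (m <= n)%N) :
  let q := #|F| in
  hankel_rank_count F m n r =
    (if r == 0 then 1
     else if (r <= m)%N then q ^ (2 * r - 2) * (q ^ 2 - 1)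
     else if r == m.+1 then q ^ (2 * r - 2) * (q ^ (n - m + 1) - 1)
     else 0)%N.
Proof.
move=> q; rewrite /hankel_rank_count.
have hr : forall x : {ffun 'I_(m + n).+1 -> F}, \rank (hankel x) = rho x m.
  by move=> x; rewrite /rho addKn.
have -> : #|[set x : {ffun 'I_(m + n).+1 -> F} | \rank (hankel x) == r]| = #|[set x : {ffun 'I_(m + n).+1 -> F} | rho x m == r]|.
  by apply: eq_card => x; rewrite !inE hr.
have mN : (m + m <= m + n)%N by lia.
have Bm : forall s, (s <= m)%N ->
    #|[set x : {ffun 'I_(m + n).+1 -> F} | (rho x m <= s)%N]| = (q ^ (2 * s))%N.
  move=> s sm; rewrite -(@bval F (m + n) s); last by lia.
  by apply: eq_card => x; rewrite !inE rho_profile.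
have le1 : forall x : {ffun 'I_(m + n).+1 -> F}, (rho x m <= m.+1)%N.
  by move=> x; apply: rank_leq_row.
case: (posnP r) => [->|r0] /=.
  have := Bm 0%N (leq0n _); rewrite muln0 expn0 => <-.
  by apply: eq_card => x; rewrite !inE leqn0.
case: (leqP r m) => rm.
  have := split_le (fun x : {ffun 'I_(m + n).+1 -> F} => rho x m) r.-1.
  rewrite prednK // Bm // Bm; last by lia.
  move=> h; have -> : (2 * r - 2 = 2 * r.-1)%N by lia.
  rewrite mulnBr muln1 -expnD.
  have -> : (2 * r.-1 + 2 = 2 * r)%N by lia.
  by rewrite h addKn.
case: eqP => [->|rm1].
  have := split_le (fun x : {ffun 'I_(m + n).+1 -> F} => rho x m) m.
  rewrite (Bm m) //.
  have -> : #|[set t : {ffun 'I_(m + n).+1 -> F} | (rho t m <= m.+1)%N]| = (q ^ (m + n).+1)%N.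
    transitivity #|{: {ffun 'I_(m + n).+1 -> F}}|; last by rewrite card_ffun card_ord.
    apply: eq_card => x.
    by rewrite inE le1.
  move=> h; have -> : (2 * m.+1 - 2 = 2 * m)%N by lia.
  rewrite mulnBr muln1 -expnD.
  have -> : (2 * m + (n - m + 1) = (m + n).+1)%N by lia.
  by rewrite h addKn.
rewrite card_sum big1 // => x _.
by have := le1 x; case: eqP => // e; lia.
Qed.
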